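(* Let $n\geq2$ and $\mathrm{Ch}_{3,n}(x)=x_1^3-3x_1(x_2^2+\dots+x_n^2)$. Then \[ \frac{1}{3n-2}\mathrm{Ch}_{3,n}(x)=\frac{n+2}{9n-6}x_1^3+\frac{4}{9n-6}\sum_{i=2}^n\left[-\Big(\frac{x_1+\sqrt3x_i}{2}\Big)^3+\Big(\frac{-x_1+\sqrt3x_i}{2}\Big)^3\right]. \] In particular, the symmetric tensor associated with $\mathrm{Ch}_{3,n}$ is critical in $\mathrm{Sym}^3(\mathbb{R}^n)$.
   Context: Tensors and norms: \begin{itemize} \item The symmetric tensor $A$ associated with a form $p\in P_{d,n}$ satisfies $p(x)=\langle A,x\otimes\cdots\otimes x\rangle_F$, where $\langle\cdot,\cdot\rangle_F$ is the Frobenius inner product. \item The spectral norm is $\|A\|_2=\max_{\|x^{(j)}\|=1}\langle A,x^{(1)}\otimes\cdots\otimes x^{(d)}\rangle_F$. \end{itemize} Generalized gradient (Clarke): for a Lipschitz function $f$ on a Euclidean space, $\partial f(p)$ is the convex hull of all limits of $\nabla f(p_i)$, taken over sequences $p_i\to p$ of differentiability points. A nonzero $A\in\mathrm{Sym}^d(\mathbb{R}^n)$ is critical in $\mathrm{Sym}^d(\mathbb{R}^n)$ if $\lambda A\in\partial g(A/\|A\|_F)$ for some $\lambda\in\mathbb{R}$, where $g$ is the spectral norm as a function on the Euclidean space $(\mathrm{Sym}^d(\mathbb{R}^n),\langle\cdot,\cdot\rangle_F)$. *)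

(* Defs.v *)
From Stdlib Require Import Reals Lra ClassicalEpsilon.
Open Scope R_scope.

(* Vectors in R^n: x : nat -> R, meaningful on indices 0..n-1 (x 0 is x_1).
   3-tensors on R^n: A : nat -> nat -> nat -> R, meaningful on indices < n. *)
Definition vec := nat -> R.
Definition tensor := nat -> nat -> nat -> R.

Fixpoint rsum (n : nat) (f : nat -> R) : R :=
  match n with O => 0 | S m => rsum m f + f m end.

Definition tadd (A B : tensor) : tensor := fun i j k => A i j k + B i j k.
Definition tsub (A B : tensor) : tensor := fun i j k => A i j k - B i j k.
Definition tscale (c : R) (A : tensor) : tensor := fun i j k => c * A i j k.
Definition outer3 (x y z : vec) : tensor := fun i j k => x i * y j * z k.

Definition teq (n : nat) (A B : tensor) : Prop :=
  forall i j k, (i < n)%nat -> (j < n)%nat -> (k < n)%nat -> A i j k = B i j k.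

Definition tsym (n : nat) (A : tensor) : Prop :=
  forall i j k, (i < n)%nat -> (j < n)%nat -> (k < n)%nat ->
    A i j k = A j i k /\ A i j k = A i k j.

Definition frob (n : nat) (A B : tensor) : R :=
  rsum n (fun i => rsum n (fun j => rsum n (fun k => A i j k * B i j k))).
Definition fnorm (n : nat) (A : tensor) : R := sqrt (frob n A A).

Definition vnorm2 (n : nat) (x : vec) : R := rsum n (fun i => x i * x i).

Definition spec_vals (n : nat) (A : tensor) (v : R) : Prop :=
  exists x y z : vec, vnorm2 n x = 1 /\ vnorm2 n y = 1 /\ vnorm2 n z = 1 /\
    v = frob n A (outer3 x y z).
Definition specnorm (n : nat) (A : tensor) : R :=
  epsilon (inhabits 0) (is_lub (spec_vals n A)).

Definition has_grad (n : nat) (f : tensor -> R) (p G : tensor) : Prop :=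
  tsym n G /\
  forall eps, 0 < eps -> exists delta, 0 < delta /\
    forall h, tsym n h -> fnorm n h < delta ->
      Rabs (f (tadd p h) - f p - frob n G h) <= eps * fnorm n h.

Definition tconv (n : nat) (s : nat -> tensor) (L : tensor) : Prop :=
  forall eps, 0 < eps -> exists N, forall k, (N <= k)%nat -> fnorm n (tsub (s k) L) < eps.

Definition clarke_limits (n : nat) (f : tensor -> R) (p G : tensor) : Prop :=
  exists ps Gs : nat -> tensor,
    (forall k, tsym n (ps k)) /\ (forall k, has_grad n f (ps k) (Gs k)) /\
    tconv n ps p /\ tconv n Gs G.

Definition conv_hull (n : nat) (S : tensor -> Prop) (X : tensor) : Prop :=
  exists (m : nat) (lam : nat -> R) (pts : nat -> tensor),
    (forall i, (i < m)%nat -> 0 <= lam i /\ S (pts i)) /\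
    rsum m lam = 1 /\
    teq n X (fun a b c => rsum m (fun i => lam i * pts i a b c)).

Definition clarke_grad (n : nat) (f : tensor -> R) (p X : tensor) : Prop :=
  conv_hull n (clarke_limits n f p) X.

Definition critical (n : nat) (A : tensor) : Prop :=
  tsym n A /\ fnorm n A <> 0 /\
  exists lam : R, clarke_grad n (specnorm n) (tscale (/ fnorm n A) A) (tscale lam A).

Definition Ch3 (n : nat) (x : vec) : R :=
  x 0%nat ^ 3 - 3 * x 0%nat * rsum (n - 1) (fun i => x (S i) ^ 2).

(* Main.v *)
Require Import Defs.
From Stdlib Require Import Reals Lra Lia Psatz ClassicalEpsilon.
Open Scope R_scope.

Lemma rsum_ext_lt k f g : (forall i, (i < k)%nat -> f i = g i) -> rsum k f = rsum k g.
Proof. induction k; intros H; simpl; auto. rewrite IHk by (intros; apply H; lia). rewrite H by lia. reflexivity. Qed.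
Lemma rsum_ext k f g : (forall i, f i = g i) -> rsum k f = rsum k g.
Proof. intros; apply rsum_ext_lt; auto. Qed.
Lemma rsum_plus k f g : rsum k (fun i => f i + g i) = rsum k f + rsum k g.
Proof. induction k; cbn [rsum]; [ring| rewrite IHk; ring]. Qed.
Lemma rsum_scal k c f : rsum k (fun i => c * f i) = c * rsum k f.
Proof. induction k; cbn [rsum]; [ring| rewrite IHk; ring]. Qed.
Lemma rsum_scal_r k c f : rsum k (fun i => f i * c) = rsum k f * c.
Proof. induction k; cbn [rsum]; [ring| rewrite IHk; ring]. Qed.
Lemma rsum_zero k : rsum k (fun _ => 0) = 0.
Proof. induction k; cbn [rsum]; [ring| rewrite IHk; ring]. Qed.
Lemma rsum_le k f g : (forall i, (i<k)%nat -> f i <= g i) -> rsum k f <= rsum k g.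
Proof. induction k; intros H; simpl; [lra|]. assert (f k <= g k) by (apply H; lia).
 assert (rsum k f <= rsum k g) by (apply IHk; intros; apply H; lia). lra. Qed.
Lemma rsum_ge0 k f : (forall i, (i<k)%nat -> 0 <= f i) -> 0 <= rsum k f.
Proof. intros H. rewrite <- (rsum_zero k). apply rsum_le; auto. Qed.
Lemma rsum_swap a b f : rsum a (fun i => rsum b (fun j => f i j)) = rsum b (fun j => rsum a (fun i => f i j)).
Proof. induction a; simpl. rewrite rsum_zero; auto. rewrite IHa, rsum_plus; auto. Qed.
Lemma rsum_shift k f : rsum (S k) f = f 0%nat + rsum k (fun i => f (S i)).
Proof. induction k. simpl; ring. change (rsum (S (S k)) f) with (rsum (S k) f + f (S k)).
 rewrite IHk. simpl. ring. Qed.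
Lemma rsum_split2 k f : rsum (S (k+k)) f = f 0%nat + rsum k (fun i => f (S (i+i)) + f (S (S (i+i)))).
Proof. induction k. simpl; ring. rewrite Nat.add_succ_r. simpl plus.
 change (rsum (S (S (S (k+k)))) f) with (rsum (S (k+k)) f + f (S (k+k)) + f (S (S (k+k)))).
 rewrite IHk. simpl rsum. ring. Qed.
Lemma rsum_amgm k s F G H : 0 < s -> (forall i, (i<k)%nat -> 2*F i <= s*G i + H i / s) ->
  2*rsum k F <= s*rsum k G + rsum k H / s.
Proof. intros Hs; induction k; intros Hi; simpl. replace (0/s) with 0 by (field; lra); lra.
 assert (2*F k <= s*G k + H k / s) by (apply Hi; lia).
 assert (2*rsum k F <= s*rsum k G + rsum k H / s) by (apply IHk; intros; apply Hi; lia).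
 unfold Rdiv in *. rewrite Rmult_plus_distr_r. lra. Qed.
Lemma amgm2 s a b : 0 < s -> 2*(a*b) <= s*(a*a) + b*b/s.
Proof. intros Hs. assert (E: s*(a*a) + b*b/s - 2*(a*b) = (s*a-b)*(s*a-b)/s) by (field; lra).
 assert (0 <= (s*a-b)*(s*a-b)/s). { apply Rmult_le_pos. exact (Rle_0_sqr _). apply Rlt_le, Rinv_0_lt_compat; lra. } lra. Qed.

Definition e (a:nat) : vec := fun i => if Nat.eqb i a then 1 else 0.
Lemma rsum_delta_ge k a f : (k <= a)%nat -> rsum k (fun i => f i * e a i) = 0.
Proof. induction k; intros; simpl; auto. rewrite IHk by lia. unfold e.
 replace (Nat.eqb k a) with false. ring. symmetry; apply Nat.eqb_neq; lia. Qed.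
Lemma rsum_delta k a f : (a < k)%nat -> rsum k (fun i => f i * e a i) = f a.
Proof. induction k; intros; [lia|]. simpl. destruct (Nat.eq_dec a k).
 - subst. rewrite rsum_delta_ge by lia. unfold e; rewrite Nat.eqb_refl; ring.
 - rewrite IHk by lia. unfold e. replace (Nat.eqb k a) with false. ring. symmetry; apply Nat.eqb_neq; lia. Qed.

Lemma CS_aux k a b c d : rsum k (fun i => (c * b i - d * a i)^2) =
  c*c*rsum k (fun i => b i * b i) + d*d*rsum k (fun i => a i * a i) - 2*c*d*rsum k (fun i => a i * b i).
Proof. induction k; cbn [rsum]; [ring| rewrite IHk; ring]. Qed.
Lemma CS k (a b : nat -> R) : (rsum k (fun i => a i * b i))^2 <= rsum k (fun i => a i * a i) * rsum k (fun i => b i * b i).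
Proof. induction k; cbn [rsum]. lra.
 pose proof (CS_aux k a b (a k) (b k)).
 assert (0 <= rsum k (fun i => (a k * b i - b k * a i)^2)) by (apply rsum_ge0; intros; cbv beta; first [apply pow2_ge_0 | exact (Rle_0_sqr _)]).
 assert (0 <= rsum k (fun i => a i * a i)) by (apply rsum_ge0; intros; cbv beta; first [apply pow2_ge_0 | exact (Rle_0_sqr _)]).
 assert (0 <= rsum k (fun i => b i * b i)) by (apply rsum_ge0; intros; cbv beta; first [apply pow2_ge_0 | exact (Rle_0_sqr _)]).
 nra. Qed.

Definition dot n (x y : vec) := rsum n (fun i => x i * y i).

Lemma frob_ext1 n A A' B : (forall i j k, (i<n)%nat -> (j<n)%nat -> (k<n)%nat -> A i j k = A' i j k) -> frob n A B = frob n A' B.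
Proof. intros H; unfold frob; apply rsum_ext_lt; intros; apply rsum_ext_lt; intros; apply rsum_ext_lt; intros. rewrite H; auto. Qed.
Lemma frob_ext2 n A B B' : (forall i j k, (i<n)%nat -> (j<n)%nat -> (k<n)%nat -> B i j k = B' i j k) -> frob n A B = frob n A B'.
Proof. intros H; unfold frob; apply rsum_ext_lt; intros; apply rsum_ext_lt; intros; apply rsum_ext_lt; intros. rewrite H; auto. Qed.
Lemma frob_comm n A B : frob n A B = frob n B A.
Proof. unfold frob; apply rsum_ext; intros; apply rsum_ext; intros; apply rsum_ext; intros; ring. Qed.
Lemma frob_add1 n A B C : frob n (tadd A B) C = frob n A C + frob n B C.
Proof. unfold frob, tadd. rewrite <- rsum_plus. apply rsum_ext; intro. rewrite <- rsum_plus; apply rsum_ext; intro.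
 rewrite <- rsum_plus; apply rsum_ext; intro; ring. Qed.
Lemma frob_scal1 n c A B : frob n (tscale c A) B = c * frob n A B.
Proof. unfold frob, tscale. rewrite <- rsum_scal. apply rsum_ext; intro. rewrite <- rsum_scal; apply rsum_ext; intro.
 rewrite <- rsum_scal; apply rsum_ext; intro; ring. Qed.
Lemma frob_add2 n A B C : frob n A (tadd B C) = frob n A B + frob n A C.
Proof. rewrite !(frob_comm n A). apply frob_add1. Qed.
Lemma frob_scal2 n c A B : frob n A (tscale c B) = c * frob n A B.
Proof. rewrite !(frob_comm n A). apply frob_scal1. Qed.
Lemma frob_zero1 n B : frob n (fun _ _ _ => 0) B = 0.
Proof. unfold frob. transitivity (rsum n (fun _:nat => 0)); [|apply rsum_zero]. apply rsum_ext; intro.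
 transitivity (rsum n (fun _:nat => 0)); [|apply rsum_zero]. apply rsum_ext; intro.
 transitivity (rsum n (fun _:nat => 0)); [|apply rsum_zero]. apply rsum_ext; intro. ring. Qed.
Lemma frob_nonneg n A : 0 <= frob n A A.
Proof. unfold frob. apply rsum_ge0; intros; apply rsum_ge0; intros; apply rsum_ge0; intros. exact (Rle_0_sqr _). Qed.
Lemma frob_amgm n s A B : 0 < s -> 2 * frob n A B <= s * frob n A A + frob n B B / s.
Proof. intros Hs. unfold frob. apply rsum_amgm; auto; intros. apply rsum_amgm; auto; intros.
 apply rsum_amgm; auto; intros. apply amgm2; auto. Qed.
Lemma frob_outer n a b c x y z : frob n (outer3 a b c) (outer3 x y z) = dot n a x * dot n b y * dot n c z.
Proof. unfold frob, outer3, dot. rewrite <- !rsum_scal_r.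
 apply rsum_ext; intro i.
 transitivity (rsum n (fun j => (b j * y j) * (a i * x i * rsum n (fun k => c k * z k)))).
 - apply rsum_ext; intro j. transitivity (rsum n (fun k => (b j * y j * (a i * x i)) * (c k * z k))).
   + apply rsum_ext; intro k. ring.
   + rewrite rsum_scal. ring.
 - rewrite rsum_scal_r. ring. Qed.
Lemma frob_sum n m g B : frob n (fun a b c => rsum m (fun j => g j a b c)) B = rsum m (fun j => frob n (g j) B).
Proof. induction m. simpl. apply frob_zero1.
 simpl. rewrite <- IHm. rewrite <- frob_add1. apply frob_ext1. intros. reflexivity. Qed.

Lemma fnorm_sq n A : fnorm n A * fnorm n A = frob n A A.
Proof. unfold fnorm. apply sqrt_sqrt, frob_nonneg. Qed.
Lemma fnorm_nonneg n A : 0 <= fnorm n A.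
Proof. apply sqrt_pos. Qed.

Lemma dot_e n a x : (a<n)%nat -> dot n (e a) x = x a.
Proof. intros. unfold dot. rewrite (rsum_ext _ _ (fun i => x i * e a i)) by (intros; ring). apply rsum_delta; auto. Qed.
Lemma dot_comb n a b c1 c2 x : (a<n)%nat -> (b<n)%nat -> dot n (fun i => c1 * e a i + c2 * e b i) x = c1 * x a + c2 * x b.
Proof. intros. unfold dot. rewrite (rsum_ext _ _ (fun i => c1 * (x i * e a i) + c2 * (x i * e b i))) by (intros; ring).
 rewrite rsum_plus, !rsum_scal, !rsum_delta; auto. Qed.

Lemma specnorm_bounds n X L0 U : spec_vals n X L0 -> (forall v, spec_vals n X v -> v <= U) -> L0 <= specnorm n X <= U.
Proof.
 intros H0 HU. unfold specnorm.
 assert (Hex: exists m, is_lub (spec_vals n X) m).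
 { destruct (completeness (spec_vals n X)) as [m Hm]. exists U; intros v Hv; auto. exists L0; auto. exists m; auto. }
 destruct (epsilon_spec (inhabits 0) (is_lub (spec_vals n X)) Hex) as [Hub Hl].
 split. apply Hub; auto. apply Hl. intros v Hv; auto.
Qed.

Lemma vnorm_dot n x : vnorm2 n x = dot n x x.
Proof. reflexivity. Qed.

Section Est.
Variables (n : nat) (p : tensor) (v : vec) (c t : R).
Hypothesis Hv : vnorm2 n v = 1.
Hypothesis Ht : 0 < t.
Hypothesis Ht1 : t <= 1.
Hypothesis Hb : forall x y z, vnorm2 n x = 1 -> vnorm2 n y = 1 -> vnorm2 n z = 1 -> frob n p (outer3 x y z) <= c.
Hypothesis Hc : frob n p (outer3 v v v) = c.


Lemma frob_X X h B : (forall i j k, X i j k = (1-t) * p i j k + t * (outer3 v v v) i j k + h i j k) ->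
  frob n X B = (1-t) * frob n p B + t * frob n (outer3 v v v) B + frob n h B.
Proof. intros HX. rewrite (frob_ext1 n X (tadd (tadd (tscale (1-t) p) (tscale t (outer3 v v v))) h)).
 rewrite !frob_add1, !frob_scal1. ring. intros. rewrite HX. reflexivity. Qed.

Lemma ww : frob n (outer3 v v v) (outer3 v v v) = 1.
Proof. rewrite frob_outer, <- vnorm_dot, Hv. ring. Qed.

Lemma val_upper X h x y z : (forall i j k, X i j k = (1-t) * p i j k + t * (outer3 v v v) i j k + h i j k) ->
  vnorm2 n x = 1 -> vnorm2 n y = 1 -> vnorm2 n z = 1 ->
  frob n X (outer3 x y z) <= (1-t)*c + t + frob n h (outer3 v v v) + frob n h h / (2*t).
Proof.
 intros HX Hx Hy Hz. rewrite (frob_X X h) by auto.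
 set (D := tadd (outer3 x y z) (tscale (-1) (outer3 v v v))).
 assert (E1: frob n h (outer3 x y z) = frob n h (outer3 v v v) + frob n h D).
 { unfold D. rewrite frob_add2, frob_scal2.
   rewrite (frob_ext2 n h (outer3 x y z) (tadd (outer3 v v v) (tadd (outer3 x y z) (tscale (-1) (outer3 v v v))))).
   rewrite frob_add2, frob_add2, frob_scal2. ring. intros. unfold tadd, tscale. ring. }
 assert (E2: frob n D D = 2 - 2 * frob n (outer3 v v v) (outer3 x y z)).
 { unfold D. rewrite !frob_add1, !frob_add2, !frob_scal1, !frob_scal2, frob_outer.
   rewrite <- !vnorm_dot, Hx, Hy, Hz, ww, (frob_comm n (outer3 x y z) (outer3 v v v)). ring. }
 pose proof (frob_amgm n (/t) h D) as Ham. assert (0 < /t) by (apply Rinv_0_lt_compat; lra).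
 specialize (Ham H). replace (frob n D D / / t) with (t * frob n D D) in Ham by (field; lra).
 assert (E3: frob n h h / (2*t) = / t * frob n h h / 2) by (field; lra).
 rewrite E3, E1. pose proof (Hb x y z Hx Hy Hz).
 assert ((1-t) * frob n p (outer3 x y z) <= (1-t)*c) by (apply Rmult_le_compat_l; lra).
 rewrite E2 in Ham. lra.
Qed.

Lemma val_at X h : (forall i j k, X i j k = (1-t) * p i j k + t * (outer3 v v v) i j k + h i j k) ->
  spec_vals n X ((1-t)*c + t + frob n h (outer3 v v v)).
Proof. intros HX. exists v, v, v. split; [|split; [|split]]; auto.
 rewrite (frob_X X h) by auto. rewrite ww, Hc. ring. Qed.

Lemma specnorm_X X h : (forall i j k, X i j k = (1-t) * p i j k + t * (outer3 v v v) i j k + h i j k) ->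
  (1-t)*c + t + frob n h (outer3 v v v) <= specnorm n X <= (1-t)*c + t + frob n h (outer3 v v v) + frob n h h / (2*t).
Proof. intros HX. apply specnorm_bounds. apply (val_at X h HX).
 intros u [x [y [z [Hx [Hy [Hz ->]]]]]]. apply val_upper; auto. Qed.

End Est.

Lemma fnorm_scal n t X : 0 <= t -> fnorm n (tscale t X) = t * fnorm n X.
Proof. intros. unfold fnorm. rewrite frob_scal1, frob_scal2, <- Rmult_assoc.
 rewrite sqrt_mult_alt. rewrite sqrt_square; auto. apply Rmult_le_pos; auto. Qed.

Lemma tsym_outer n v : tsym n (outer3 v v v).
Proof. unfold tsym, outer3; intros; split; ring. Qed.

Lemma clarke_rank1 n p v c : tsym n p -> vnorm2 n v = 1 ->
  (forall x y z, vnorm2 n x = 1 -> vnorm2 n y = 1 -> vnorm2 n z = 1 -> frob n p (outer3 x y z) <= c) ->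
  frob n p (outer3 v v v) = c ->
  clarke_limits n (specnorm n) p (outer3 v v v).
Proof.
 intros Hp Hv Hb Hc.
 set (w := outer3 v v v).
 set (tk := fun k : nat => / (INR k + 2)).
 assert (Htk : forall k, 0 < tk k /\ tk k <= 1).
 { intros k. unfold tk. pose proof (pos_INR k). split. apply Rinv_0_lt_compat; lra.
   rewrite <- Rinv_1. apply Rinv_le_contravar; lra. }
 exists (fun k => tadd (tscale (1 - tk k) p) (tscale (tk k) w)), (fun _ => w).
 split; [|split; [|split]].
 - intros k. unfold tsym, tadd, tscale, w, outer3. intros i j l Hi Hj Hl.
   destruct (Hp i j l Hi Hj Hl) as [E1 E2]. split; [rewrite E1 | rewrite E2]; ring.
 - intros k. destruct (Htk k) as [Ht Ht1]. set (t := tk k) in *.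
   split. apply tsym_outer.
   intros eps Heps. exists (2 * t * eps). split. apply Rmult_lt_0_compat; lra.
   intros h _ Hh.
   set (T := tadd (tscale (1 - t) p) (tscale t w)).
   pose proof (specnorm_X n p v c t Hv Ht Ht1 Hb Hc (tadd T h) h) as B1.
   pose proof (specnorm_X n p v c t Hv Ht Ht1 Hb Hc T (fun _ _ _ => 0)) as B2.
   rewrite !frob_zero1 in B2.
   assert (X1 : forall i j k0, tadd T h i j k0 = (1 - t) * p i j k0 + t * outer3 v v v i j k0 + h i j k0) by (intros; reflexivity).
   assert (X2 : forall i j k0, T i j k0 = (1 - t) * p i j k0 + t * outer3 v v v i j k0 + 0) by (intros; unfold T, tadd, tscale, w; ring).
   specialize (B1 X1). specialize (B2 X2).
   replace (0 / (2*t)) with 0 in B2 by (field; lra).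
   rewrite (frob_comm n w h). fold w in B1.
   set (q := frob n h h / (2*t)) in *.
   assert (Hq : q <= eps * fnorm n h).
   { unfold q. rewrite <- fnorm_sq. pose proof (fnorm_nonneg n h).
     assert (fnorm n h * fnorm n h <= fnorm n h * (2*t*eps)) by (apply Rmult_le_compat_l; lra).
     apply Rmult_le_reg_r with (2*t). lra.
     replace (fnorm n h * fnorm n h / (2 * t) * (2 * t)) with (fnorm n h * fnorm n h) by (field; lra). lra. }
   rewrite Rabs_pos_eq; lra.
 - intros eps Heps.
   set (K := fnorm n (tsub w p)).
   assert (HK : 0 <= K) by apply fnorm_nonneg.
   assert (Hkn : forall k, fnorm n (tsub (tadd (tscale (1 - tk k) p) (tscale (tk k) w)) p) = tk k * K).
   { intros k. destruct (Htk k). unfold K. rewrite <- fnorm_scal by lra. unfold fnorm.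
     rewrite (frob_ext1 _ _ (tscale (tk k) (tsub w p))), (frob_ext2 _ _ _ (tscale (tk k) (tsub w p))). reflexivity.
     all: intros; unfold tsub, tadd, tscale; ring. }
   assert (He : 0 < eps / (K+1)) by (apply Rdiv_lt_0_compat; lra).
   destruct (archimed_cor1 _ He) as [N [HN1 HN2]].
   exists N. intros k Hk. rewrite Hkn.
   assert (0 < INR N) by (apply lt_0_INR; lia).
   assert (INR N <= INR k) by (apply le_INR; lia).
   assert (tk k <= / INR N) by (unfold tk; apply Rinv_le_contravar; lra).
   assert (tk k * K <= eps / (K+1) * K) by (apply Rmult_le_compat_r; lra).
   assert (E: eps/(K+1)*K = eps - eps/(K+1)) by (field; lra). lra.
 - intros eps Heps. unfold fnorm. rewrite (frob_ext1 _ _ (fun _ _ _ => 0)), frob_zero1, sqrt_0. exists 0%nat; intros; lra.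
   intros; unfold tsub; ring.
Qed.

Definition F3 n D (x y z : vec) := frob n D (outer3 x y z).
Definition vadd (x y : vec) : vec := fun i => x i + y i.

Lemma F3_add1 n D x x' y z : F3 n D (vadd x x') y z = F3 n D x y z + F3 n D x' y z.
Proof. unfold F3. rewrite <- frob_add2. apply frob_ext2. intros. unfold tadd, outer3, vadd. ring. Qed.
Lemma F3_add2 n D x y y' z : F3 n D x (vadd y y') z = F3 n D x y z + F3 n D x y' z.
Proof. unfold F3. rewrite <- frob_add2. apply frob_ext2. intros. unfold tadd, outer3, vadd. ring. Qed.
Lemma F3_add3 n D x y z z' : F3 n D x y (vadd z z') = F3 n D x y z + F3 n D x y z'.
Proof. unfold F3. rewrite <- frob_add2. apply frob_ext2. intros. unfold tadd, outer3, vadd. ring. Qed.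

Lemma F3_sym12 n D x y z : tsym n D -> F3 n D x y z = F3 n D y x z.
Proof. intros HS. unfold F3, frob, outer3.
 rewrite (rsum_swap n n (fun i j => rsum n (fun k => D i j k * (y i * x j * z k)))).
 apply rsum_ext_lt; intros i Hi. apply rsum_ext_lt; intros j Hj. apply rsum_ext_lt; intros k Hk.
 destruct (HS j i k Hj Hi Hk) as [E1 _]. rewrite E1. ring. Qed.
Lemma F3_sym23 n D x y z : tsym n D -> F3 n D x y z = F3 n D x z y.
Proof. intros HS. unfold F3, frob, outer3.
 apply rsum_ext_lt; intros i Hi.
 rewrite (rsum_swap n n (fun j k => D i j k * (x i * z j * y k))).
 apply rsum_ext_lt; intros j Hj. apply rsum_ext_lt; intros k Hk.
 destruct (HS i k j Hi Hk Hj) as [_ E2]. rewrite E2. ring. Qed.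

Lemma polar n D : tsym n D -> (forall x, F3 n D x x x = 0) -> forall x y z, F3 n D x y z = 0.
Proof.
 intros HS HQ x y z.
 pose proof (HQ (vadd x (vadd y z))) as H1. pose proof (HQ (vadd x y)) as H2.
 pose proof (HQ (vadd x z)) as H3. pose proof (HQ (vadd y z)) as H4.
 pose proof (HQ x). pose proof (HQ y). pose proof (HQ z).
 repeat (rewrite ?F3_add1, ?F3_add2, ?F3_add3 in H1). rewrite !F3_add1, !F3_add2, !F3_add3 in H2, H3, H4.
 pose proof (F3_sym23 n D x x y HS). pose proof (F3_sym12 n D x y x HS).
 pose proof (F3_sym23 n D x x z HS). pose proof (F3_sym12 n D x z x HS).
 pose proof (F3_sym23 n D y y x HS). pose proof (F3_sym12 n D y x y HS).
 pose proof (F3_sym23 n D y y z HS). pose proof (F3_sym12 n D y z y HS).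
 pose proof (F3_sym23 n D z z x HS). pose proof (F3_sym12 n D z x z HS).
 pose proof (F3_sym23 n D z z y HS). pose proof (F3_sym12 n D z y z HS).
 pose proof (F3_sym23 n D x y z HS). pose proof (F3_sym12 n D x y z HS).
 pose proof (F3_sym23 n D y x z HS). pose proof (F3_sym12 n D x z y HS).
 pose proof (F3_sym23 n D z x y HS).
 lra.
Qed.

Lemma F3_basis n D a b c : (a<n)%nat -> (b<n)%nat -> (c<n)%nat -> F3 n D (e a) (e b) (e c) = D a b c.
Proof.
 intros. unfold F3, frob, outer3.
 transitivity (rsum n (fun i => rsum n (fun j => D i j c * e b j) * e a i)).
 - apply rsum_ext; intro i. rewrite <- rsum_scal_r. apply rsum_ext; intro j.
   transitivity (rsum n (fun k => (D i j k * (e a i * e b j)) * e c k)).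
   + apply rsum_ext; intro k; ring.
   + rewrite (rsum_delta n c (fun k => D i j k * (e a i * e b j))) by auto. ring.
 - rewrite (rsum_delta n a (fun i => rsum n (fun j => D i j c * e b j))) by auto.
   apply (rsum_delta n b (fun j => D a j c)); auto.
Qed.

Definition vv (j : nat) : vec := match j with
  | O => e 0
  | S j' => if Nat.even j' then (fun a => (-/2) * e 0 a + (- sqrt 3 / 2) * e (S (Nat.div2 j')) a)
            else (fun a => (-/2) * e 0 a + (sqrt 3 / 2) * e (S (Nat.div2 j')) a) end.
Definition mu (n j : nat) : R := match j with O => (INR n + 2) / (9 * INR n - 6) | S _ => 4 / (9 * INR n - 6) end.
Definition Ct (n : nat) : tensor := fun a b c => rsum (S ((n-1)+(n-1))) (fun j => mu n j * outer3 (vv j) (vv j) (vv j) a b c).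
Definition Sdot n (y z : vec) := rsum (n-1) (fun i => y (S i) * z (S i)).
Definition Tf n (x y z : vec) := x 0%nat * y 0%nat * z 0%nat - x 0%nat * Sdot n y z - y 0%nat * Sdot n x z - z 0%nat * Sdot n x y.

Lemma even_dbl i : Nat.even (i+i) = true.
Proof. induction i; auto. rewrite Nat.add_succ_r. exact IHi. Qed.
Lemma div2_dbl i : Nat.div2 (i+i) = i.
Proof. replace (i+i)%nat with (2*i)%nat by lia. apply Nat.div2_double. Qed.
Lemma even_sdbl i : Nat.even (S (i+i)) = false.
Proof. induction i; auto. rewrite Nat.add_succ_r. exact IHi. Qed.
Lemma div2_sdbl i : Nat.div2 (S (i+i)) = i.
Proof. replace (i+i)%nat with (2*i)%nat by lia. apply Nat.div2_succ_double. Qed.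

Lemma vv1 i : vv (S (i+i)) = fun a => (-/2) * e 0 a + (- sqrt 3 / 2) * e (S i) a.
Proof. unfold vv. rewrite even_dbl, div2_dbl. reflexivity. Qed.
Lemma vv2 i : vv (S (S (i+i))) = fun a => (-/2) * e 0 a + (sqrt 3 / 2) * e (S i) a.
Proof. unfold vv. rewrite even_sdbl, div2_sdbl. reflexivity. Qed.

Lemma s3 : sqrt 3 * sqrt 3 = 3.
Proof. apply sqrt_sqrt. lra. Qed.

Lemma pair_id K s x0 y0 z0 xi yi zi : s*s = 3 ->
 K * ((-/2*x0 + -s/2*xi) * (-/2*y0 + -s/2*yi) * (-/2*z0 + -s/2*zi)) +
 K * ((-/2*x0 + s/2*xi) * (-/2*y0 + s/2*yi) * (-/2*z0 + s/2*zi))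
 = (-K/4)*(x0*y0*z0) + (-3*K/4)*(x0*(yi*zi)+y0*(xi*zi)+z0*(xi*yi)).
Proof. intros Hs. transitivity ((-K/4)*(x0*y0*z0) + (-(s*s)*K/4)*(x0*(yi*zi)+y0*(xi*zi)+z0*(xi*yi))).
 field. rewrite Hs. field. Qed.

Lemma sum_lin k a b X x0 y0 z0 (Y Z W : nat -> R) :
  rsum k (fun i => a*X + b*(x0*Y i + y0*Z i + z0*W i)) = INR k*a*X + b*(x0*rsum k Y + y0*rsum k Z + z0*rsum k W).
Proof. induction k; cbn [rsum]. simpl; ring. rewrite IHk, S_INR. ring. Qed.

Lemma FC n x y z : (2 <= n)%nat -> F3 n (Ct n) x y z = Tf n x y z / (3 * INR n - 2).
Proof.
 intros Hn. assert (HI : 2 <= INR n) by (apply (le_INR 2); lia).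
 unfold F3, Ct.
 transitivity (rsum (S ((n-1)+(n-1))) (fun j => frob n (tscale (mu n j) (outer3 (vv j) (vv j) (vv j))) (outer3 x y z))).
 apply (frob_sum n _ (fun j => tscale (mu n j) (outer3 (vv j) (vv j) (vv j)))).
 rewrite (rsum_ext _ _ (fun j => mu n j * (dot n (vv j) x * dot n (vv j) y * dot n (vv j) z)))
   by (intros; rewrite frob_scal1, frob_outer; reflexivity).
 rewrite rsum_split2.
 set (K := 4 / (9 * INR n - 6)).
 rewrite (rsum_ext_lt _ _ (fun i => (-K/4)*(x 0%nat*y 0%nat*z 0%nat) + (-3*K/4)*(x 0%nat*(y (S i)*z (S i))+y 0%nat*(x (S i)*z (S i))+z 0%nat*(x (S i)*y (S i))))).
 2:{ intros i Hi. rewrite vv1, vv2. unfold mu. fold K.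
     rewrite !dot_comb by lia. apply pair_id, s3. }
 rewrite sum_lin. unfold Tf, Sdot. simpl vv. rewrite !dot_e by lia. unfold mu, K.
 rewrite minus_INR by lia. simpl INR. field. lra.
Qed.

Lemma T_le1 n x y z : (1 <= n)%nat -> vnorm2 n x = 1 -> vnorm2 n y = 1 -> vnorm2 n z = 1 -> Tf n x y z <= 1.
Proof.
 intros Hn Hx Hy Hz.
 assert (Hv : forall u, vnorm2 n u = u 0%nat * u 0%nat + Sdot n u u).
 { intros u. unfold vnorm2, Sdot. replace n with (S (n-1)) at 1 by lia. rewrite rsum_shift. reflexivity. }
 rewrite Hv in Hx, Hy, Hz. unfold Tf.
 set (x0 := x 0%nat) in *. set (y0 := y 0%nat) in *. set (z0 := z 0%nat) in *.
 assert (Q : rsum (n-1) (fun i => (x (S i) + (y0 * z (S i) + z0 * y (S i)))^2) =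
   Sdot n x x + 2*y0*Sdot n x z + 2*z0*Sdot n x y + y0*y0*Sdot n z z + z0*z0*Sdot n y y + 2*y0*z0*Sdot n y z).
 { unfold Sdot. generalize (n-1)%nat. intros k. induction k; cbn [rsum]. ring. rewrite IHk. ring. }
 assert (Q0 : 0 <= rsum (n-1) (fun i => (x (S i) + (y0 * z (S i) + z0 * y (S i)))^2)).
 { apply rsum_ge0; intros; cbv beta; apply pow2_ge_0. }
 pose proof (CS (n-1) (fun i => y (S i)) (fun i => z (S i))) as HCS. cbv beta in HCS.
 fold (Sdot n y z) (Sdot n y y) (Sdot n z z) in HCS.
 assert (0 <= (x0 - (y0*z0 - Sdot n y z))^2) by apply pow2_ge_0.
 assert (E : (y0*y0 + Sdot n y y) * (z0*z0 + Sdot n z z) = 1) by (rewrite Hy, Hz; ring).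
 nra.
Qed.

Lemma T_Ch3 n x : Tf n x x x = Ch3 n x.
Proof. unfold Tf, Ch3, Sdot. rewrite (rsum_ext _ (fun i => x (S i) * x (S i)) (fun i => x (S i) ^ 2)) by (intros; ring). ring. Qed.

Lemma part1 n x : (2 <= n)%nat ->
     / (3 * INR n - 2) * Ch3 n x =
     (INR n + 2) / (9 * INR n - 6) * x 0%nat ^ 3 +
     4 / (9 * INR n - 6) *
       rsum (n - 1) (fun i =>
         - ((x 0%nat + sqrt 3 * x (S i)) / 2) ^ 3 +
           ((- x 0%nat + sqrt 3 * x (S i)) / 2) ^ 3).
Proof.
 intros Hn. assert (HI : 2 <= INR n) by (apply (le_INR 2); lia).
 rewrite (rsum_ext _ _ (fun i => (-/4) * (x 0%nat ^3) + (-9/4) * (x 0%nat * (x (S i))^2))).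
 2:{ intros i. transitivity ((-/4) * (x 0%nat ^3) + (-3 * (sqrt 3 * sqrt 3)/4) * (x 0%nat * (x (S i))^2)).
     field. rewrite s3. field. }
 assert (L : forall k, rsum k (fun i => (-/4) * (x 0%nat ^3) + (-9/4) * (x 0%nat * (x (S i))^2)) =
   INR k * (-/4) * x 0%nat ^ 3 + (-9/4) * x 0%nat * rsum k (fun i => x (S i) ^ 2)).
 { induction k; cbn [rsum]. simpl; ring. rewrite IHk, S_INR. ring. }
 rewrite L. unfold Ch3. rewrite minus_INR by lia. simpl INR. field. lra.
Qed.

Lemma idx_cases k j : (j < S (k+k))%nat -> j = 0%nat \/ exists i, (i<k)%nat /\ (j = S (i+i) \/ j = S (S (i+i))).
Proof. intros H. destruct j. left; auto. right.
 destruct (Nat.Even_or_Odd j) as [[i Hi]|[i Hi]]; exists i; split; lia. Qed.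

Lemma vv_props n j : (2 <= n)%nat -> (j < S ((n-1)+(n-1)))%nat ->
  vnorm2 n (vv j) = 1 /\ Ch3 n (vv j) = 1 /\ 0 <= mu n j.
Proof.
 intros Hn Hj. assert (HI : 2 <= INR n) by (apply (le_INR 2); lia).
 pose proof s3 as S3.
 destruct (idx_cases _ _ Hj) as [-> | [i [Hi [-> | ->]]]].
 - simpl vv. split; [|split].
   + rewrite vnorm_dot, dot_e by lia. reflexivity.
   + unfold Ch3. rewrite (rsum_ext _ _ (fun _ => 0)), rsum_zero. unfold e; simpl; ring.
     intros k. unfold e. simpl. ring.
   + unfold mu. apply Rlt_le, Rdiv_lt_0_compat; lra.
 - rewrite vv1. split; [|split].
   + rewrite vnorm_dot, dot_comb by lia. unfold e. simpl. rewrite Nat.eqb_refl. nra.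
   + unfold Ch3. rewrite (rsum_ext _ _ (fun k => (3/4) * ((fun _ => 1) k * e i k))).
     rewrite rsum_scal, rsum_delta by lia. unfold e; simpl. field.
     intros k. unfold e. simpl. destruct (Nat.eqb k i); nra.
   + unfold mu. apply Rlt_le, Rdiv_lt_0_compat; lra.
 - rewrite vv2. split; [|split].
   + rewrite vnorm_dot, dot_comb by lia. unfold e. simpl. rewrite Nat.eqb_refl. nra.
   + unfold Ch3. rewrite (rsum_ext _ _ (fun k => (3/4) * ((fun _ => 1) k * e i k))).
     rewrite rsum_scal, rsum_delta by lia. unfold e; simpl. field.
     intros k. unfold e. simpl. destruct (Nat.eqb k i); nra.
   + unfold mu. apply Rlt_le, Rdiv_lt_0_compat; lra.
Qed.

Lemma rsum_one k : rsum k (fun _ => 1) = INR k.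
Proof. induction k; cbn [rsum]. reflexivity. rewrite IHk, S_INR. ring. Qed.

Theorem corollary1p13 (n : nat) (Hn : (2 <= n)%nat) :
  (forall x : vec,
     / (3 * INR n - 2) * Ch3 n x =
     (INR n + 2) / (9 * INR n - 6) * x 0%nat ^ 3 +
     4 / (9 * INR n - 6) *
       rsum (n - 1) (fun i =>
         - ((x 0%nat + sqrt 3 * x (S i)) / 2) ^ 3 +
           ((- x 0%nat + sqrt 3 * x (S i)) / 2) ^ 3)) /\
  (forall A : tensor, tsym n A ->
     (forall x : vec, frob n A (outer3 x x x) = Ch3 n x) ->
     critical n A).
Proof.
 split. intros; apply part1; auto.
 intros A HA HAc.
 assert (HI : 2 <= INR n) by (apply (le_INR 2); lia).
 assert (HAC : forall a b c, (a<n)%nat -> (b<n)%nat -> (c<n)%nat -> A a b c = (3*INR n - 2) * Ct n a b c).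
 { set (D := tadd A (tscale (-(3*INR n-2)) (Ct n))).
   assert (HD : tsym n D).
   { unfold D, tsym, tadd, tscale, Ct. intros i j k Hi Hj Hk. destruct (HA i j k Hi Hj Hk) as [E1 E2].
     split; [rewrite E1 | rewrite E2]; f_equal; f_equal; apply rsum_ext; intros; unfold outer3; ring. }
   assert (HQ : forall x, F3 n D x x x = 0).
   { intros x. unfold F3, D. rewrite frob_add1, frob_scal1. fold (F3 n (Ct n) x x x).
     rewrite HAc, FC, T_Ch3 by auto. field. lra. }
   intros a b c Ha Hb Hc. pose proof (polar n D HD HQ (e a) (e b) (e c)) as H0.
   rewrite F3_basis in H0 by auto. unfold D, tadd, tscale in H0. lra. }
 assert (FA : forall x y z, frob n A (outer3 x y z) = Tf n x y z).
 { intros. rewrite (frob_ext1 n A (tscale (3*INR n-2) (Ct n))) by auto. rewrite frob_scal1.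
   fold (F3 n (Ct n) x y z). rewrite FC by auto. field. lra. }
 assert (He0 : vnorm2 n (e 0) = 1) by (rewrite vnorm_dot, dot_e by lia; reflexivity).
 assert (Hnz : fnorm n A <> 0).
 { intro H0. assert (HAA : frob n A A = 0).
   { unfold fnorm in H0. apply sqrt_eq_0 in H0; auto. apply frob_nonneg. }
   pose proof (frob_amgm n 1 A (outer3 (e 0) (e 0) (e 0)) Rlt_0_1) as H1.
   rewrite frob_outer, HAA, HAc in H1. rewrite <- vnorm_dot, He0 in H1.
   assert (Ch3 n (e 0) = 1).
   { unfold Ch3. rewrite (rsum_ext _ _ (fun _ => 0)), rsum_zero. unfold e; simpl; ring.
     intros k. unfold e. simpl. ring. }
   lra. }
 assert (Hpos : 0 < fnorm n A) by (pose proof (fnorm_nonneg n A); lra).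
 split; auto. split; auto.
 exists (/ (3*INR n - 2)).
 exists (S ((n-1)+(n-1))), (mu n), (fun j => outer3 (vv j) (vv j) (vv j)).
 split; [|split].
 - intros j Hj. destruct (vv_props n j Hn Hj) as [Hv [Hch Hmu]]. split; auto.
   apply clarke_rank1 with (c := / fnorm n A); auto.
   + unfold tsym, tscale. intros i j0 k Hi Hj0 Hk. destruct (HA i j0 k Hi Hj0 Hk) as [E1 E2].
     split; [rewrite E1 | rewrite E2]; reflexivity.
   + intros x y z Hx Hy Hz. rewrite frob_scal1, FA.
     pose proof (T_le1 n x y z ltac:(lia) Hx Hy Hz).
     assert (0 < / fnorm n A) by (apply Rinv_0_lt_compat; auto).
     rewrite <- (Rmult_1_r (/ fnorm n A)) at 2. apply Rmult_le_compat_l; lra.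
   + rewrite frob_scal1, HAc, Hch. ring.
 - rewrite rsum_split2. rewrite (rsum_ext _ _ (fun _ => (8 / (9 * INR n - 6)) * 1)).
   rewrite rsum_scal, rsum_one. unfold mu. rewrite minus_INR by lia. simpl INR. field. lra.
   intros i. unfold mu. field. lra.
 - intros a b c Ha Hb Hc. unfold tscale. rewrite HAC by auto. unfold Ct. field. lra.
Qed.
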